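(* Let $n>30$ with $n\equiv 0\pmod 6$, and let $\mathcal{H}$ and $\Pi$ be as defined in the context. If $H,H'\in\mathcal{H}$ with $H\neq H'$, then $\Pi\cap H\cap H'=\emptyset$; that is, the subgroups in $\mathcal{H}$ partition $\Pi$.
   Context: $S_n$ is the symmetric group on $\{1,\dots,n\}$, $n\equiv 0\pmod 6$. Subgroup classes: $\mathcal{H}_{-1}$ is the set of stabilizers in $S_n$ of partitions of $\{1,\dots,n\}$ into two blocks of size $n/2$ (a stabilizer may swap the two blocks); $\mathcal{H}_0=\{A_n\}$; for $1\le i\le n/3-1$, $\mathcal{H}_i$ is the set of setwise stabilizers in $S_n$ of $i$-element subsets of $\{1,\dots,n\}$; $\mathcal{H}=\bigcup_{i=-1}^{n/3-1}\mathcal{H}_i$. Permutation classes (cycle lengths listed, all of which together account for all $n$ points): $\Pi_{-1}$ is the set of $n$-cycles; $\Pi_0$ is the set of products of two disjoint cycles of lengths $n/2-1$ and $n/2+1$ if $n/2$ is even, respectively $n/2-2$ and $n/2+2$ if $n/2$ is odd; $\Pi_1$ is the set of elements with exactly one fixed point and two further cycles of lengths $n/2-2$ and $n/2+1$; for odd $i$ with $3\le i\le n/3-1$, $\Pi_i$ is the set of products of three disjoint cycles of lengths $i$, $(n-i-1)/2$, $(n-i+1)/2$; for even $i$ with $2\le i\le n/3-1$ and $(n-i)/2$ odd, $\Pi_i$ consists of products of three disjoint cycles of lengths $i,(n-i)/2,(n-i)/2$; for even $i$ with $4\le i\le n/3-1$ and $(n-i)/2$ even, $\Pi_i$ consists of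 products of three disjoint cycles of lengths $i,(n-i)/2-1,(n-i)/2+1$; if $(n-2)/2$ is even, $\Pi_2$ consists of products of three disjoint cycles of lengths $2, n/2-4, n/2+2$. Finally $\Pi=\bigcup_{i=-1}^{n/3-1}\Pi_i$. *)

(* Defs.v *)
From mathcomp Require Import all_boot all_fingroup all_solvable.
Set Implicit Arguments. Unset Strict Implicit. Unset Printing Implicit Defensive.

(* Multiset of cycle lengths of s (fixed points counted as cycles of length 1). *)
Definition cycle_lengths (n : nat) (s : {perm 'I_n}) : seq nat :=
  [seq #|(X : {set 'I_n})| | X <- enum (porbits s)].

Definition has_cycle_type (n : nat) (s : {perm 'I_n}) (l : seq nat) : Prop :=
  perm_eq (cycle_lengths s) l.

Definition part_stab (n : nat) (A : {set 'I_n}) : {set {perm 'I_n}} :=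
  [set s : {perm 'I_n} | (s @: A == A) || (s @: A == ~: A)].

Definition set_stab (n : nat) (A : {set 'I_n}) : {set {perm 'I_n}} :=
  [set s : {perm 'I_n} | s @: A == A].

Definition in_Hm1 (n : nat) (H : {set {perm 'I_n}}) : Prop :=
  exists A : {set 'I_n}, #|A| = n %/ 2 /\ H = part_stab A.
Definition in_H0 (n : nat) (H : {set {perm 'I_n}}) : Prop :=
  H = ('Alt_('I_n))%g.
Definition in_Hi (n i : nat) (H : {set {perm 'I_n}}) : Prop :=
  exists A : {set 'I_n}, #|A| = i /\ H = set_stab A.

Definition in_calH (n : nat) (H : {set {perm 'I_n}}) : Prop :=
  in_Hm1 H \/ in_H0 H \/
  exists i, 1 <= i <= n %/ 3 - 1 /\ in_Hi i H.

Definition in_Pim1 (n : nat) (s : {perm 'I_n}) : Prop :=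
  has_cycle_type s [:: n].
Definition in_Pi0 (n : nat) (s : {perm 'I_n}) : Prop :=
  if ~~ odd (n %/ 2) then has_cycle_type s [:: n %/ 2 - 1; n %/ 2 + 1]
  else has_cycle_type s [:: n %/ 2 - 2; n %/ 2 + 2].
Definition in_Pi1 (n : nat) (s : {perm 'I_n}) : Prop :=
  has_cycle_type s [:: 1; n %/ 2 - 2; n %/ 2 + 1].
Definition in_Pi_ge2 (n i : nat) (s : {perm 'I_n}) : Prop :=
  [/\ 2 <= i, i <= n %/ 3 - 1 &
   if odd i then
     3 <= i /\ has_cycle_type s [:: i; (n - i - 1) %/ 2; (n - i + 1) %/ 2]
   else if odd ((n - i) %/ 2) then
     has_cycle_type s [:: i; (n - i) %/ 2; (n - i) %/ 2]
   else if i == 2 then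
     has_cycle_type s [:: 2; n %/ 2 - 4; n %/ 2 + 2]
   else
     has_cycle_type s [:: i; (n - i) %/ 2 - 1; (n - i) %/ 2 + 1]].

Definition in_Pi (n : nat) (s : {perm 'I_n}) : Prop :=
  in_Pim1 s \/ in_Pi0 s \/ in_Pi1 s \/ exists i, in_Pi_ge2 i s.

(* Main.v *)
Require Import Defs.
From mathcomp Require Import all_boot all_fingroup all_solvable.
From mathcomp Require Import zify.
Set Implicit Arguments. Unset Strict Implicit. Unset Printing Implicit Defensive.

Fixpoint subsP (L : seq nat) (v : nat) : Prop :=
  match L with
  | [::] => v = 0
  | x :: L' => subsP L' v \/ (x <= v /\ subsP L' (v - x))
  end.

Definition SS (L : seq nat) v := exists l1 l2, perm_eq L (l1 ++ l2) /\ sumn l1 = v.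

Lemma SS_perm L L' v : perm_eq L L' -> SS L v -> SS L' v.
Proof. move=> pL [l1 [l2 [p e]]]; exists l1, l2; split=> //; by apply: perm_trans p; rewrite perm_sym. Qed.

Lemma SS_P L v : SS L v -> subsP L v.
Proof.
elim: L v => [|x L IH] v [l1 [l2 [p e]]] /=.
  move: (perm_size p); rewrite size_cat /= => /esym/eqP; rewrite addn_eq0.
  by case/andP=> /eqP/size0nil l10 _; rewrite -e l10.
have : x \in l1 ++ l2 by rewrite -(perm_mem p) mem_head.
rewrite mem_cat => /orP[xl1|xl2].
  have E1 := perm_sumn (perm_to_rem xl1).
  right; split; first by rewrite -e E1 /= leq_addr.
  apply: IH; exists (rem x l1), l2; split; last by rewrite -e E1 /= addKn.
  rewrite -(perm_cons x) (perm_trans p) //.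
  by rewrite -cat_cons perm_cat2r perm_to_rem.
left; apply: IH; exists l1, (rem x l2); split=> //.
rewrite -(perm_cons x) (perm_trans p) //.
rewrite perm_catC (perm_trans (_ : perm_eq _ ((x :: rem x l2) ++ l1))) //.
  by rewrite perm_cat2r perm_to_rem.
by rewrite /= perm_cons perm_catC.
Qed.

Section Orb.
Variables (T : finType) (s : {perm T}).
Definition inv (B : {set T}) := forall x, (s x \in B) = (x \in B).
Definition anti (B : {set T}) := forall x, (s x \in B) = (x \notin B).
Definition clen := [seq #|(X : {set T})| | X <- enum (porbits s)].

Lemma imset_eqP (A B : {set T}) : (s @: A == B) = [forall x, (s x \in B) == (x \in A)].
Proof.
apply/eqP/forallP => [<- x|h]; first by rewrite mem_imset //; exact: perm_inj.
apply/setP => y; rewrite -(permKV s y) mem_imset; last exact: perm_inj.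
by rewrite (eqP (h _)).
Qed.

Lemma porbit_inv x : inv (porbit s x).
Proof.
move=> y; rewrite -!eq_porbit_mem.
have E : porbit s (s y) = porbit s y by rewrite -(porbit_perm s 1 y) expg1.
by rewrite E.
Qed.

Lemma porbit_sub B x : inv B -> x \in B -> porbit s x \subset B.
Proof.
move=> iB xB; apply/subsetP => y /porbitP[i ->].
elim: i => [|i IH]; first by rewrite expg0 perm1.
by rewrite expgSr permM iB.
Qed.

Lemma card_inv B : inv B -> #|B| = \sum_(X in porbits s | X \subset B) #|X|.
Proof.
move=> iB.
have -> : \sum_(X in porbits s | X \subset B) #|X| =
          \sum_(X in [set X in porbits s | X \subset B]) #|X|.
  by apply: eq_bigl => X; rewrite inE.
apply: card_partition; apply/and3P; split.
- apply/eqP/setP => y; apply/bigcupP/idP => [[X]|yB].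
    by rewrite inE => /andP[_ /subsetP XB] /XB.
  exists (porbit s y); last exact: porbit_id.
  by rewrite inE imset_f // porbit_sub.
- apply/trivIsetP => X Y; rewrite !inE.
  case/andP=> /imsetP[x _ ->] _ /andP[/imsetP[y _ ->] _] neq.
  rewrite -setI_eq0; apply/eqP/setP => z; rewrite !inE; apply/negbTE/negP => /andP[zx zy].
  case/eqP: neq.
  by rewrite -(eqP (_ : porbit s z == porbit s x)) ?eq_porbit_mem // (eqP (_ : porbit s z == porbit s y)) ?eq_porbit_mem.
- rewrite inE negb_and; apply/orP; left; apply/imsetP => -[x _ /setP/(_ x)].
  by rewrite porbit_id inE.
Qed.

Lemma SS_inv B : inv B -> SS clen #|B|.
Proof.
move=> iB; pose p := fun X : {set T} => X \subset B.
exists [seq #|(X : {set T})| | X <- filter p (enum (porbits s))],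
       [seq #|(X : {set T})| | X <- filter (predC p) (enum (porbits s))].
split; first by rewrite -map_cat; apply: perm_map; rewrite perm_sym perm_filterC.
by rewrite card_inv // sumnE big_map big_filter big_enum_cond.
Qed.

Lemma anti_even A X : anti A -> X \in porbits s -> ~~ odd #|X|.
Proof.
move=> aA /imsetP[x _ ->]; set Y := porbit s x.
have iY := porbit_inv x.
have le1 : #|Y :&: A| <= #|Y :&: ~: A|.
  rewrite -(card_imset _ (@perm_inj _ s)); apply: subset_leq_card.
  apply/subsetP => z /imsetP[y]; rewrite !inE => /andP[yY yA] ->.
  by rewrite iY yY aA yA.
have le2 : #|Y :&: ~: A| <= #|Y :&: A|.
  rewrite -(card_imset _ (@perm_inj _ s)); apply: subset_leq_card.
  apply/subsetP => z /imsetP[y]; rewrite !inE => /andP[yY yA] ->.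
  by rewrite iY yY aA yA.
rewrite -(cardsID A Y) setDE.
have -> : #|Y :&: A| = #|Y :&: ~: A| by apply/eqP; rewrite eqn_leq le1 le2.
by rewrite addnn odd_double.
Qed.

Lemma clen_even A : anti A -> all (fun k => ~~ odd k) clen.
Proof.
move=> aA; apply/allP => k /mapP[X XP ->]; rewrite mem_enum in XP.
exact: anti_even XP.
Qed.

Lemma inv_orbit A k : inv A -> #|A| = k -> 0 < k ->
  (forall v, v \in clen -> 0 < v <= k -> v = k) ->
  exists2 X, X \in porbits s & A = X /\ #|X| = k.
Proof.
move=> iA cA k0 hk.
have : 0 < #|A| by rewrite cA.
rewrite card_gt0 => /set0Pn[x xA].
have sub := porbit_sub iA xA.
have XP : porbit s x \in porbits s by rewrite imset_f.
have cX : #|porbit s x| = k.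
  apply: hk; first by apply/mapP; exists (porbit s x); rewrite ?mem_enum.
  by rewrite lt0n card_porbit_neq0 -cA subset_leq_card.
exists (porbit s x); first exact: XP.
split; last exact: cX.
apply/eqP; rewrite eq_sym eqEcard sub cX cA leqnn.
by [].
Qed.

Lemma inv_uniq k A A' : inv A -> inv A' -> #|A| = k -> #|A'| = k -> 0 < k ->
  (forall v, v \in clen -> 0 < v <= k -> v = k) -> count_mem k clen <= 1 -> A = A'.
Proof.
move=> iA iA' cA cA' k0 hk hc.
have [X XP [-> cX]] := inv_orbit iA cA k0 hk.
have [Y YP [-> cY]] := inv_orbit iA' cA' k0 hk.
apply/eqP; apply/negPn/negP => nXY.
move: hc; rewrite count_map.
have XE : X \in enum (porbits s) by rewrite mem_enum.
rewrite (elimT seq.permP (perm_to_rem XE)) /= cX eqxx add1n ltnS leqn0.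
rewrite -leqn0 leqNgt -has_count => /hasP; apply.
exists Y; last by rewrite /= cY.
by rewrite (mem_rem_uniq _ (enum_uniq _)) inE eq_sym nXY mem_enum.
Qed.

End Orb.

Lemma subs1 a v : subsP [:: a] v -> v = 0 \/ v = a.
Proof. move=> /=; lia. Qed.
Lemma subs2 a b v : subsP [:: a; b] v -> v = 0 \/ v = a \/ v = b \/ v = a + b.
Proof. move=> /=; lia. Qed.
Lemma subs3 k a b v : subsP [:: k; a; b] v ->
  v = 0 \/ v = k \/ v = a \/ v = b \/ v = k + a \/ v = k + b \/ v = a + b \/ v = k + a + b.
Proof. move=> /=; lia. Qed.

Lemma classify n (s : {perm 'I_n}) L H : perm_eq (cycle_lengths s) L -> ~~ odd n ->
  in_calH H -> s \in H ->
  subsP L (n %/ 2)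
  \/ (all (fun k => ~~ odd k) L /\
      exists A : {set 'I_n}, [/\ #|A| = n %/ 2, H = part_stab A & anti s A])
  \/ (~~ odd (size L) /\ H = ('Alt_('I_n))%g)
  \/ (exists A : {set 'I_n}, [/\ 1 <= #|A|, #|A| <= n %/ 3 - 1, H = set_stab A, inv s A
                                & subsP L #|A|]).
Proof.
move=> pL oddn [[A [cA ->]]|[->|[i [ri [A [cA ->]]]]]].
- rewrite inE => /orP[/eqP e|/eqP e].
  + left; rewrite -cA; apply: SS_P; apply: SS_perm pL _; apply: SS_inv => x.
    by rewrite -{1}e mem_imset //; exact: perm_inj.
  + have aA : anti s A.
      move=> x; have := mem_imset A x (@perm_inj _ s); rewrite e inE => <-.
      by rewrite negbK.
    right; left; split; last by exists A.
    by rewrite -(perm_all _ pL); exact: clen_even aA.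
- rewrite Alt_even => hs; right; right; left; split=> //.
  move: hs; rewrite /odd_perm card_ord (negbTE oddn) /= -(perm_size pL).
  by rewrite /cycle_lengths size_map -cardE.
- rewrite inE => /eqP e; right; right; right; exists A; case/andP: ri => r1 r2; split.
  + by rewrite cA.
  + by rewrite cA.
  + by [].
  + by move=> x; rewrite -{1}e mem_imset //; exact: perm_inj.
  + apply: SS_P; apply: SS_perm pL _; apply: SS_inv => x.
    by rewrite -{1}e mem_imset //; exact: perm_inj.
Qed.

Lemma part_stabC n (A : {set 'I_n}) : part_stab (~: A) = part_stab A.
Proof.
apply/setP => t; rewrite !inE !imset_eqP setCK.
congr (_ || _); apply: eq_forallb => x; rewrite !inE;
  by case: (t x \in A); case: (x \in A).
Qed.

Lemma case_cycle n m (s : {perm 'I_n}) : n = 6 * m -> 5 < m ->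
  perm_eq (cycle_lengths s) [:: n] ->
  forall H H', in_calH H -> in_calH H' -> s \in H -> s \in H' -> H = H'.
Proof.
move=> Hm m5 pL H H' cH cH' sH sH'.
have oddn : ~~ odd n by lia.
have d2 : n %/ 2 = 3 * m by lia.
have d3 : n %/ 3 = 2 * m by lia.
have key : forall G, in_calH G -> s \in G ->
    exists A : {set 'I_n}, G = part_stab A /\ anti s A.
  move=> G cG sG.
  case: (classify pL oddn cG sG) => [h|[[_ [A [_ -> aA]]]|[[hh _]|[A [c1 c2 _ _ hS]]]]].
  - move: (subs1 h); rewrite d2; lia.
  - by exists A.
  - by [].
  - move: (subs1 hS) c2; rewrite d3; lia.
have [A [-> aA]] := key _ cH sH.
have [A' [-> aA']] := key _ cH' sH'.
pose B := [set x | (x \in A) == (x \in A')].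
have iB : inv s B.
  by move=> x; rewrite !inE aA aA'; case: (x \in A); case: (x \in A').
have hB : subsP [:: n] #|B|.
  apply: SS_P; apply: SS_perm pL _; exact: SS_inv iB.
have leB : #|B| <= n by have := max_card B; rewrite card_ord.
have [B0|Bn] : #|B| = 0 \/ #|B| = n by move: (subs1 hB); lia.
- have -> : A' = ~: A.
    apply/setP => x; have := cards0_eq B0; move/setP/(_ x); rewrite !inE.
    by case: (x \in A); case: (x \in A').
  by rewrite part_stabC.
- have BT : B = [set: 'I_n].
    by apply/eqP; rewrite eqEcard subsetT cardsT card_ord Bn leqnn.
  have -> : A' = A.
    apply/setP => x; move: BT; move/setP/(_ x); rewrite !inE.
    by case: (x \in A); case: (x \in A').
  by [].
Qed.

Lemma case_two n m (s : {perm 'I_n}) a b : n = 6 * m -> 5 < m ->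
  perm_eq (cycle_lengths s) [:: a; b] -> a + b = n -> odd a -> 2 * m <= a ->
  2 * m <= b -> a <> 3 * m ->
  forall H H', in_calH H -> in_calH H' -> s \in H -> s \in H' -> H = H'.
Proof.
move=> Hm m5 pL ab oa a3 b3 an2 H H' cH cH' sH sH'.
have oddn : ~~ odd n by lia.
have d2 : n %/ 2 = 3 * m by lia.
have d3 : n %/ 3 = 2 * m by lia.
have key : forall G, in_calH G -> s \in G -> G = ('Alt_('I_n))%g.
  move=> G cG sG.
  case: (classify pL oddn cG sG) => [h|[[hh _]|[[_ ->]|[A [c1 c2 _ _ hS]]]]].
  - move: (subs2 h); rewrite d2; lia.
  - by move: hh; rewrite /= oa.
  - by [].
  - move: (subs2 hS) c2; rewrite d3; lia.
by rewrite (key _ cH sH) (key _ cH' sH').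
Qed.

Lemma case_three n m (s : {perm 'I_n}) k a b : n = 6 * m -> 5 < m ->
  perm_eq (cycle_lengths s) [:: k; a; b] -> k + a + b = n ->
  1 <= k -> k < 2 * m -> 2 * m <= a -> 2 * m <= b ->
  a <> 3 * m -> b <> 3 * m -> k + a <> 3 * m -> k + b <> 3 * m ->
  odd a || odd b ->
  forall H H', in_calH H -> in_calH H' -> s \in H -> s \in H' -> H = H'.
Proof.
move=> Hm m5 pL kab k1 k2 a3 b3 a2 b2 ka2 kb2 oab H H' cH cH' sH sH'.
have oddn : ~~ odd n by lia.
have d2 : n %/ 2 = 3 * m by lia.
have d3 : n %/ 3 = 2 * m by lia.
have key : forall G, in_calH G -> s \in G ->
    exists A : {set 'I_n}, [/\ G = set_stab A, inv s A & #|A| = k].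
  move=> G cG sG.
  case: (classify pL oddn cG sG) => [h|[[hh _]|[[hh _]|[A [c1 c2 -> iA hS]]]]].
  - move: (subs3 h); rewrite d2; lia.
  - move: oab hh => /=; case: (odd a); case: (odd b) => //=; rewrite ?andbF //.
  - by [].
  - exists A; split=> //; move: (subs3 hS) c2; rewrite d3; lia.
have [A [-> iA cA]] := key _ cH sH.
have [A' [-> iA' cA']] := key _ cH' sH'.
have k0 : 0 < k by lia.
have hk : forall v, v \in clen s -> 0 < v <= k -> v = k.
  move=> v; rewrite /clen -/(cycle_lengths s) (perm_mem pL) !inE.
  case/or3P => /eqP -> //; lia.
have hc : count_mem k (clen s) <= 1.
  rewrite /clen -/(cycle_lengths s) (elimT seq.permP pL) /= eqxx.
  have -> : (a == k) = false by apply/eqP; lia.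
  by have -> : (b == k) = false by apply/eqP; lia.
by rewrite (inv_uniq iA iA' cA cA' k0 hk hc).
Qed.

Theorem lemma3p7 (n : nat) :
  30 < n -> n %% 6 = 0 ->
  forall H H' : {set {perm 'I_n}},
    in_calH H -> in_calH H' -> H <> H' ->
    forall s : {perm 'I_n}, in_Pi s -> ~ (s \in H /\ s \in H').
Proof.
move=> n30 n6 H H' cH cH' neq s sPi [sH sH']; apply: neq.
have [m Hm] : exists m, n = 6 * m by exists (n %/ 6); lia.
have m5 : 5 < m by lia.
have d2 : n %/ 2 = 3 * m by lia.
have d3 : n %/ 3 = 2 * m by lia.
case: sPi => [h|[h|[h|[i h]]]].
- exact: (case_cycle Hm m5 h cH cH' sH sH').
- move: h; rewrite /in_Pi0; case: ifP => ev h.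
  + apply: (case_two Hm m5 h _ _ _ _ _ cH cH' sH sH'); lia.
  + apply: (case_two Hm m5 h _ _ _ _ _ cH cH' sH sH'); lia.
- apply: (case_three Hm m5 h _ _ _ _ _ _ _ _ _ _ cH cH' sH sH'); lia.
- case: h => i2 i3; case: ifP => oi.
    case=> i3' h; apply: (case_three Hm m5 h _ _ _ _ _ _ _ _ _ _ cH cH' sH sH'); lia.
  case: ifP => oc.
    move=> h; apply: (case_three Hm m5 h _ _ _ _ _ _ _ _ _ _ cH cH' sH sH'); lia.
  case: ifP => /eqP i2' h; apply: (case_three Hm m5 h _ _ _ _ _ _ _ _ _ _ cH cH' sH sH'); lia.
Qed.
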